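(* Let $G$ be a graph, $k$ a positive integer, $P$ a non-trivial prime graph in a split decomposition of $G$, and $(T,\delta)$ a branch decomposition of $G$ of sm-width less than $k$. For every heavy pair $a,b$ in $P$ (with respect to $k$) there is a cut $(X,Y)$ of $G$ induced by an edge of $T$ such that $\operatorname{tot}^{-1}(X:P)=\{a,b\}$ and $|N_G(X)|<k$.
   Context: Graphs are finite, simple, undirected; $\overline{A}=V(G)\setminus A$; $N(S)=N_G(S)=(\bigcup_{v\in S}N(v))\setminus S$. A split of a connected graph $G$ is a partition $(V_1,V_2)$ of $V(G)$ with $|V_1|,|V_2|\ge2$ such that every vertex of $V_1$ with a neighbour in $V_2$ has the same neighbourhood in $V_2$. $\operatorname{mm}(A)$ is the maximum size of a matching among edges between $A$ and $\overline A$; $\operatorname{sm}(A)=1$ if $(A,\overline A)$ is a split, else $\operatorname{mm}(A)$. A branch decomposition $(T,\delta)$: tree of max degree 3 and bijection $\delta$ from leaves to $V(G)$; each edge of $T$ induces the cut given by leaf-images of the two components of $T-e$; its sm-width is the max of $\operatorname{sm}$ over induced cuts. Split decomposition: decomposing along a split $(V_1,V_2)$ gives $G[V_1]$ plus a new marker adjacent to $N_G(V_2)$ and $G[V_2]$ plus the same marker adjacent to $N_G(V_1)$; prime = no split; non-trivial = more than 3 vertices; recursively decomposing until all parts are prime gives a split decomposition, with tree having prime graphs as nodes adjacent iff sharing a marker. For $v\in V(G_i)$: $\operatorname{tot}(v:G_i)=\{v\}$ if $v\in V(G)$, else (marker shared with $G_j$) the vertices of $V(G)$ in prime graphs of the component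 of the tree minus $G_i$ containing $G_j$; $\operatorname{tot}(V':G_i)=\bigcup_{v\in V'}\operatorname{tot}(v:G_i)$. For $S\subseteq V(G)$, $\operatorname{tot}^{-1}(S:G_i)$ is the minimal $V'\subseteq V(G_i)$ with $S\subseteq\operatorname{tot}(V':G_i)$. $\operatorname{act}(v:G_i)=N_G(V(G)\setminus\operatorname{tot}(v:G_i))$. With respect to $k$, adjacent $a,b\in V(G_i)$ form a heavy pair if $|\operatorname{act}(a:G_i)|\ge3k$ and $|\operatorname{act}(b:G_i)|\ge3k$. *)

(* Defs.v *)
From mathcomp Require Import all_boot.
Set Implicit Arguments. Unset Strict Implicit. Unset Printing Implicit Defensive.

(* A simple graph: vertex type V : finType, adjacency e : rel V
   (symmetric, irreflexive -- assumed as hypotheses in the theorem). *)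

Definition Nbhd (V : finType) (e : rel V) (S : {set V}) : {set V} :=
  [set y | [exists x in S, e x y]] :\: S.

Definition connected_on (T : finType) (Vs : {set T}) (e : rel T) : bool :=
  [forall x in Vs, forall y in Vs,
    connect (fun u w => [&& u \in Vs, w \in Vs & e u w]) x y].

Definition is_split (T : finType) (Vs : {set T}) (e : rel T) (A : {set T}) : bool :=
  [&& A \subset Vs, 2 <= #|A|, 2 <= #|Vs :\: A|, connected_on Vs e &
      [forall x in A, forall x' in A,
        ([exists y in Vs :\: A, e x y] && [exists y in Vs :\: A, e x' y]) ==>
        ([set y in Vs :\: A | e x y] == [set y in Vs :\: A | e x' y])]].

Definition matching_across (V : finType) (e : rel V) (A : {set V})
    (M : {set V * V}) : bool :=
  [forall p in M, [&& p.1 \in A, p.2 \notin A & e p.1 p.2]] &&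
  [forall p in M, forall q in M, (p != q) ==> ((p.1 != q.1) && (p.2 != q.2))].

Definition mm (V : finType) (e : rel V) (A : {set V}) : nat :=
  \max_(M : {set V * V} | matching_across e A M) #|M|.

Definition sm (V : finType) (e : rel V) (A : {set V}) : nat :=
  if is_split setT e A then 1 else mm e A.

Definition acyclic (W : finType) (t : rel W) : Prop :=
  ~ exists s : seq W, [&& uniq s, 2 < size s & cycle t s].

Definition is_tree (W : finType) (t : rel W) : Prop :=
  [/\ symmetric t, irreflexive t, (forall x y, connect t x y) & acyclic t].

Definition deg (W : finType) (t : rel W) (x : W) : nat := #|[set y | t x y]|.

Definition leaf (W : finType) (t : rel W) (x : W) : bool := deg t x == 1.

Definition branch_decomp (V W : finType) (t : rel W) (delta : W -> V) : Prop :=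
  [/\ is_tree t, (forall x, deg t x <= 3),
      {in leaf t &, injective delta} &
      (forall v, exists2 l, leaf t l & delta l = v)].

Definition t_minus (W : finType) (t : rel W) (x y : W) : rel W :=
  fun u w => t u w && ~~ (((u == x) && (w == y)) || ((u == y) && (w == x))).

Definition cut (V W : finType) (t : rel W) (delta : W -> V) (x y : W) : {set V} :=
  [set v | [exists l, [&& leaf t l, delta l == v & connect (t_minus t x y) x l]]].

Definition sm_width_lt (V W : finType) (e : rel V) (t : rel W) (delta : W -> V)
    (k : nat) : Prop :=
  forall x y, t x y -> sm e (cut t delta x y) < k.

(* A graph arising during split decomposition. Each vertex u is identified
   with the set tot(u) of vertices of G it stands for: an original vertex v
   of G is [set v], a marker is the set of vertices of G on its other side.
   (These sets partition V(G), so this identification is injective.) *)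
Record lgraph (V : finType) := LG { lverts : {set {set V}}; ladj : rel {set V} }.

Definition init_lgraph (V : finType) (e : rel V) : lgraph V :=
  LG [set [set v] | v : V] (fun X Y => [exists x in X, exists y in Y, e x y]).

(* decomposing L along the split (A, lverts L \ A): the part on the side A,
   i.e. L[A] plus a new marker adjacent to N_L(lverts L \ A).
   The marker's tot is the union of the tots of the other side. *)
Definition piece (V : finType) (L : lgraph V) (A : {set {set V}}) : lgraph V :=
  let B := lverts L :\: A in
  let m := \bigcup_(Y in B) Y in
  let nb := [set X in A | [exists Y in B, ladj L X Y]] in
  LG (m |: A)
     (fun X Y => if X == m then Y \in nb else if Y == m then X \in nb
                 else [&& X \in A, Y \in A & ladj L X Y]).

Definition lprime (V : finType) (L : lgraph V) : Prop :=
  forall A, ~~ is_split (lverts L) (ladj L) A.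

(* split_decomp L D : D is (the set of prime graphs = nodes of) a split
   decomposition of L, obtained by recursively decomposing along splits
   until all parts are prime. *)
Inductive split_decomp (V : finType) : lgraph V -> (lgraph V -> Prop) -> Prop :=
| sd_prime L : lprime L -> split_decomp L (fun P => P = L)
| sd_split L A D1 D2 :
    is_split (lverts L) (ladj L) A ->
    split_decomp (piece L A) D1 ->
    split_decomp (piece L (lverts L :\: A)) D2 ->
    split_decomp L (fun P => D1 P \/ D2 P).

Definition tot (V : finType) (V' : {set {set V}}) : {set V} := \bigcup_(u in V') u.

Definition is_totinv (V : finType) (P : lgraph V) (S : {set V})
    (V' : {set {set V}}) : bool :=
  minset (fun U : {set {set V}} => (U \subset lverts P) && (S \subset tot U)) V'.

Definition act (V : finType) (e : rel V) (u : {set V}) : {set V} := Nbhd e (~: u).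

Definition heavy_pair (V : finType) (e : rel V) (k : nat) (P : lgraph V)
    (a b : {set V}) : Prop :=
  [/\ a \in lverts P, b \in lverts P, ladj P a b,
      3 * k <= #|act e a| & 3 * k <= #|act e b|].

(* Main.v *)
Require Import Defs.
From mathcomp Require Import all_boot.
From mathcomp Require Import zify.
Set Implicit Arguments. Unset Strict Implicit. Unset Printing Implicit Defensive.

Section Blocks.
Variable V : finType.
Variable e : rel V.
Hypothesis e_sym : symmetric e.
Hypothesis e_irr : irreflexive e.

Definition cross (X Y : {set V}) := [exists x in X, exists y in Y, e x y].
Implicit Types (X Y Z : {set V}) (x y v : V).

Lemma crossP X Y : reflect (exists x y, [/\ x \in X, y \in Y & e x y]) (cross X Y).
Proof.
apply: (iffP existsP) => [[x /andP[xX /existsP[y /andP[yY exy]]]]|[x [y [xX yY exy]]]].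
  by exists x, y.
by exists x; rewrite xX; apply/existsP; exists y; rewrite yY.
Qed.

Lemma crossC X Y : cross X Y = cross Y X.
Proof.
apply/crossP/crossP => [[x [y [? ? h]]]|[x [y [? ? h]]]]; exists y, x; by rewrite e_sym.
Qed.

Lemma in_act X y : (y \in act e X) = (y \in X) && [exists x in ~: X, e x y].
Proof. by rewrite /act /Nbhd in_setD in_setC negbK inE andbC. Qed.

Lemma actP X y : reflect (y \in X /\ exists2 x, x \notin X & e y x) (y \in act e X).
Proof.
rewrite in_act; apply: (iffP andP) => [[yX /existsP[x /andP[xX exy]]]|[yX [x xX eyx]]].
  by split=> //; exists x; [rewrite -in_setC | rewrite e_sym].
by split=> //; apply/existsP; exists x; rewrite in_setC xX e_sym.
Qed.

Lemma act_sub X : act e X \subset X.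
Proof. by apply/subsetP => y /actP[]. Qed.

Record Inv (L : lgraph V) : Prop := {
  inv_ne : forall X, X \in lverts L -> X != set0;
  inv_disj : forall X Y, X \in lverts L -> Y \in lverts L -> X != Y -> [disjoint X & Y];
  inv_cov : forall v, exists2 X, X \in lverts L & v \in X;
  inv_adj : forall X Y, X \in lverts L -> Y \in lverts L ->
      ladj L X Y = (X != Y) && cross X Y;
  inv_cmp : forall X Y x y, X \in lverts L -> Y \in lverts L -> X != Y -> cross X Y ->
      x \in act e X -> y \in act e Y -> e x y }.

Lemma Inv_init : Inv (init_lgraph e).
Proof.
split => /=.
- move=> X /imsetP[v _ ->]; apply/set0Pn; exists v; exact: set11.
- move=> X Y /imsetP[u _ ->] /imsetP[v _ ->] neq.
  rewrite disjoints1 in_set1; apply: contra neq => /eqP->; done.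
- by move=> v; exists [set v]; [apply: imset_f | apply: set11].
- move=> X Y /imsetP[u _ ->] /imsetP[v _ ->].
  case: (eqVneq [set u] [set v]) => [->|_] //=.
  apply/negbTE/crossP => [[x [y [/set1P-> /set1P-> h]]]]; by rewrite e_irr in h.
- move=> X Y x y /imsetP[u _ ->] /imsetP[v _ ->] _ /crossP[x' [y' [/set1P-> /set1P-> h]]].
  by move=> /actP[/set1P-> _] /actP[/set1P-> _].
Qed.

Section InvFacts.
Variable L : lgraph V.
Hypothesis HL : Inv L.

Lemma inv_eq X Y v : X \in lverts L -> Y \in lverts L -> v \in X -> v \in Y -> X = Y.
Proof.
move=> XL YL vX vY; apply/eqP; apply: contraT => neq.
have := inv_disj HL XL YL neq; rewrite disjoint_subset => /subsetP/(_ v vX).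
by rewrite !inE vY.
Qed.

Lemma inv_adjC X Y : X \in lverts L -> Y \in lverts L -> ladj L X Y = ladj L Y X.
Proof. by move=> XL YL; rewrite !(inv_adj HL) // crossC eq_sym. Qed.
End InvFacts.

Definition Cond (L : lgraph V) (A : {set {set V}}) : Prop :=
  forall X X' Y, X \in A -> X' \in A -> Y \in lverts L :\: A ->
    (exists2 Z, Z \in lverts L :\: A & ladj L X Z) ->
    (exists2 Z, Z \in lverts L :\: A & ladj L X' Z) ->
    ladj L X Y -> ladj L X' Y.

Section Piece.
Variable L : lgraph V.
Hypothesis HL : Inv L.
Variable A : {set {set V}}.
Hypothesis AL : A \subset lverts L.
Hypothesis Bne : lverts L :\: A != set0.
Hypothesis HC : Cond L A.

Let B := lverts L :\: A.
Let m := \bigcup_(Y in B) Y.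

Lemma in_m v : reflect (exists2 Y, Y \in B & v \in Y) (v \in m).
Proof. exact: bigcupP. Qed.

Lemma BL Y : Y \in B -> Y \in lverts L.
Proof. by case/setDP. Qed.

Lemma AnB X : X \in A -> X \notin B.
Proof. by move=> XA; rewrite in_setD XA. Qed.

Lemma disj_Am X v : X \in A -> v \in X -> v \notin m.
Proof.
move=> XA vX; apply/in_m => [[Y YB vY]].
have XL : X \in lverts L by apply: (subsetP AL).
have := inv_eq HL XL (BL YB) vX vY => eXY.
by move: YB; rewrite -eXY (negbTE (AnB XA)).
Qed.

Lemma m_ne : exists v, v \in m.
Proof.
case/set0Pn: Bne => Y YB; case/set0Pn: (inv_ne HL (BL YB)) => v vY.
by exists v; apply/in_m; exists Y.
Qed.

Lemma m_notA : m \notin A.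
Proof.
apply/negP => mA; case: m_ne => v vm.
by have := disj_Am mA vm; rewrite vm.
Qed.

Lemma cross_m X : cross m X = [exists Y in B, cross Y X].
Proof.
apply/crossP/existsP => [[x [y [/in_m[Y YB xY] yX h]]]|[Y /andP[YB /crossP[x [y [xY yX h]]]]]].
  by exists Y; rewrite YB; apply/crossP; exists x, y.
by exists x, y; split => //; apply/in_m; exists Y.
Qed.

Lemma Inv_piece : Inv (piece L A).
Proof.
have mA := m_notA.
split => /=.
- move=> X /setU1P[->|XA]; last by apply: (inv_ne HL); apply: (subsetP AL).
  by case: m_ne => v vm; apply/set0Pn; exists v.
- have key : forall X, X \in A -> [disjoint X & m].
    move=> X XA; rewrite disjoint_subset; apply/subsetP => v vX.
    by rewrite !inE; apply: disj_Am vX.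
  move=> X Y /setU1P[->|XA] /setU1P[->|YA] neq; first by rewrite eqxx in neq.
  + by rewrite disjoint_sym; apply: key.
  + by apply: key.
  + by apply: (inv_disj HL); rewrite ?(subsetP AL).
- move=> v; case: (inv_cov HL v) => X XL vX.
  case XA: (X \in A); first by exists X; rewrite ?setU1r.
  exists m; first by apply: setU11.
  by apply/in_m; exists X; rewrite // in_setD XA.
- have nb_eq : forall X, X \in A ->
      (X \in [set X0 in A | [exists Y in B, ladj L X0 Y]]) = cross m X.
    move=> X XA; rewrite inE XA /= cross_m.
    apply/existsP/existsP => [[Y /andP[YB h]]|[Y /andP[YB h]]]; exists Y; rewrite YB /=.
      by move: h; rewrite (inv_adj HL) ?(BL YB) ?(subsetP AL) // crossC => /andP[].
    rewrite (inv_adj HL) ?(BL YB) ?(subsetP AL) // crossC h andbT.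
    by apply: contraNneq (AnB XA) => ->.
  move=> X Y /setU1P[->|XA] /setU1P[->|YA].
  + by rewrite eqxx /= inE (negbTE mA).
  + have nmY : m != Y by apply: contraNneq mA => ->.
    by rewrite eqxx nb_eq // nmY.

  + have -> : (X == m) = false by apply/negbTE; apply: contraNneq mA => <-.
    have nXm : X != m by apply: contraNneq mA => <-.
    by rewrite eqxx nb_eq // crossC.
  + have -> : (X == m) = false by apply/negbTE; apply: contraNneq mA => <-.
    have -> : (Y == m) = false by apply/negbTE; apply: contraNneq mA => <-.
    by rewrite XA YA /= (inv_adj HL) ?(subsetP AL).
-
  have side : forall X x y, X \in A -> cross m X -> x \in act e m -> y \in act e X -> e x y.
    move=> X x y XA cmX /actP[xm [z zm exz]] yX.
    case/in_m: xm => Z ZB xZ.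
    case: (inv_cov HL z) => X' X'L zX'.
    have X'A : X' \in A.
      apply/negPn/negP => nA; move/negP: zm; apply.
      by apply/in_m; exists X'; rewrite // in_setD nA.
    have ZL := BL ZB; have XL := subsetP AL _ XA.
    have neqZX' : Z != X' by apply: contraNneq (AnB X'A) => <-.
    have adjZX' : ladj L X' Z.
      rewrite (inv_adj HL) // eq_sym neqZX' /=; apply/crossP; exists z, x; split => //.
      by rewrite e_sym.
    have [W WB cWX] : exists2 W, W \in B & cross W X.
      by move: cmX; rewrite cross_m => /existsP[W /andP[WB h]]; exists W.
    have adjXW : ladj L X W.
      rewrite (inv_adj HL) ?(BL WB) // crossC cWX andbT.
      by apply: contraNneq (AnB XA) => ->.
    have adjXZ : ladj L X Z.
      apply: (HC X'A XA ZB _ _ adjZX'); [by exists Z | by exists W].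
    move: adjXZ; rewrite (inv_adj HL) // => /andP[nXZ cXZ].
    apply: (inv_cmp HL ZL XL) => //; first by rewrite eq_sym.
      by rewrite crossC.
    apply/actP; split => //; exists z => //.
    apply/negP => zZ; have := inv_eq HL ZL X'L zZ zX' => eZX'.
    by rewrite eZX' eqxx in neqZX'.
  move=> X Y x y /setU1P[->|XA] /setU1P[->|YA] neq.
  + by rewrite eqxx in neq.
  + by move=> c ax ay; apply: (side Y) => //.
  + by move=> c ax ay; rewrite e_sym; apply: (side X) => //; rewrite crossC.
  + by move=> c; apply: (inv_cmp HL) => //; apply: (subsetP AL).
Qed.
End Piece.


Lemma split_cond L A : Inv L -> is_split (lverts L) (ladj L) A -> Cond L A.
Proof.
move=> HL /and5P[AL _ _ _ /forallP H] X X' Y XA X'A YB [Z ZB hZ] [Z' Z'B hZ'] hY.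
have := H X; rewrite XA => /forallP/(_ X'); rewrite X'A /=.
have -> : [exists y in lverts L :\: A, ladj L X y] by apply/existsP; exists Z; rewrite ZB.
have -> : [exists y in lverts L :\: A, ladj L X' y] by apply/existsP; exists Z'; rewrite Z'B.
move=> /eqP/setP/(_ Y); rewrite !inE.
by move: YB; rewrite in_setD => /andP[-> ->]; rewrite hY.
Qed.

Lemma setDDA (T : finType) (L A : {set T}) : A \subset L -> L :\: (L :\: A) = A.
Proof.
move=> AL; apply/setP => x; rewrite !inE.
have := subsetP AL x; case: (x \in A); case: (x \in L) => //=; by move=> ->.
Qed.

Lemma split_cond2 L A : Inv L -> is_split (lverts L) (ladj L) A ->
  Cond L (lverts L :\: A).
Proof.
move=> HL Hs; have /and5P[AL _ _ _ /forallP H] := Hs.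
rewrite /Cond setDDA //.
move=> X X' Y XB X'B YA _ [Z' Z'A hZ'] hY.
have XL : X \in lverts L by case/setDP: XB.
have X'L : X' \in lverts L by case/setDP: X'B.
have YL := subsetP AL _ YA; have Z'L := subsetP AL _ Z'A.
rewrite (inv_adjC HL) // in hY; rewrite (inv_adjC HL) // in hZ'.
have := H Z'; rewrite Z'A => /forallP/(_ Y); rewrite YA /=.
have -> : [exists y in lverts L :\: A, ladj L Z' y] by apply/existsP; exists X'; rewrite X'B.
have -> : [exists y in lverts L :\: A, ladj L Y y] by apply/existsP; exists X; rewrite XB.
move=> /eqP/setP/(_ X'); rewrite !inE.
move: X'B; rewrite in_setD => /andP[-> ->] /=; rewrite hZ' => h.
by rewrite (inv_adjC HL) // -h.
Qed.

Lemma inv_D L D : split_decomp L D -> Inv L -> forall P, D P -> Inv P /\ lprime P.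
Proof.
elim => {L D} [L Lp|L A D1 D2 Hs _ IH1 _ IH2] HL P.
  by move=> ->.
have /and5P[AL A2 B2 _ _] := Hs.
case => [/IH1|/IH2]; apply.
  apply: Inv_piece => //; last exact: split_cond.
  by rewrite -card_gt0; apply: leq_trans B2.
apply: Inv_piece => //; first exact: subsetDl.
  by rewrite setDDA // -card_gt0; apply: leq_trans A2.
exact: split_cond2.
Qed.

Definition Gconn := forall x y, connect e x y.

Lemma init_or_conn D : split_decomp (init_lgraph e) D ->
  (forall P, D P -> P = init_lgraph e) \/ Gconn.
Proof.
move=> HD; inversion HD as [L Lp E1 E2|L A D1 D2 Hs H1 H2 E1 E2]; first by left.
right; have /and5P[_ _ _ /forallP Hc _] := Hs.
move=> u w; set Vs := lverts (init_lgraph e) in Hc.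
have uV : [set u] \in Vs by apply: imset_f.
have wV : [set w] \in Vs by apply: imset_f.
move: (Hc [set u]); rewrite uV => /forallP/(_ [set w]); rewrite wV /=.
set R := (fun _ _ => _).
have Rsym : connect_sym R.
  apply: sym_connect_sym => X Y; rewrite /R /=; have := crossC X Y; rewrite /cross => ->.
  by case: (X \in Vs); case: (Y \in Vs).
pose a := [pred X : {set V} | [exists v in X, connect e u v]].
have cl : closed R a.
  apply: intro_closed => // X Y /and3P[XV YV cXY] /existsP[v /andP[vX cuv]].
  move: XV YV cXY vX => /imsetP[x _ ->] /imsetP[y _ ->].
  move=> /existsP[x' /andP[/set1P-> /existsP[y' /andP[/set1P-> exy]]]] /set1P vx.
  apply/existsP; exists y; rewrite set11 /=.
  by rewrite vx in cuv; apply: connect_trans cuv (connect1 exy).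
move=> cuw; have := closed_connect cl cuw.
have -> : [set u] \in a by apply/existsP; exists u; rewrite set11 connect0.
by move=> /esym /existsP[v /andP[/set1P-> ->]].
Qed.

Lemma P_conn P : Inv P -> Gconn -> connected_on (lverts P) (ladj P).
Proof.
move=> HP Gc; apply/forallP => X; apply/implyP => XL; apply/forallP => Y; apply/implyP => YL.
set R := (fun _ _ => _).
pose a := [pred v | [exists Z in lverts P, (v \in Z) && connect R X Z]].
have esym : connect_sym e by apply: sym_connect_sym.
have cl : closed e a.
  apply: intro_closed => // v w evw /existsP[Z /and3P[ZL vZ cXZ]].
  case: (inv_cov HP w) => Z' Z'L wZ'.
  apply/existsP; exists Z'; rewrite Z'L wZ' /=.
  case: (eqVneq Z Z') => [<-|neq] //.
  apply: connect_trans cXZ (connect1 _).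
  rewrite /R ZL Z'L (inv_adj HP) // neq /=.
  by apply/crossP; exists v, w.
case/set0Pn: (inv_ne HP XL) => x xX; case/set0Pn: (inv_ne HP YL) => y yY.
have : x \in a by apply/existsP; exists X; rewrite XL xX connect0.
rewrite (closed_connect cl (Gc x y)) => /existsP[Z /and3P[ZL yZ cXZ]].
by rewrite (inv_eq HP YL ZL yY yZ).
Qed.


Definition SP (X : {set V}) := forall x x' y y', x \in X -> x' \in X -> y \notin X -> y' \notin X ->
  e x y -> e x' y' -> e x y'.

Lemma split_SP X : is_split setT e X -> SP X.
Proof.
move=> /and5P[_ _ _ _ /forallP H] x x' y y' xX x'X yX y'X exy ex'y'.
have := H x; rewrite xX => /forallP/(_ x'); rewrite x'X /=.
have -> : [exists y0 in setT :\: X, e x y0] by apply/existsP; exists y; rewrite !inE yX.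
have -> : [exists y0 in setT :\: X, e x' y0] by apply/existsP; exists y'; rewrite !inE y'X.
by move=> /eqP/setP/(_ y'); rewrite !inE y'X ex'y' /=.
Qed.

Lemma SPC X : SP X -> SP (~: X).
Proof.
move=> H x x' y y'; rewrite !inE !negbK => xX x'X yX y'X exy ex'y'.
rewrite e_sym; apply: (H y' y x' x) => //; by rewrite e_sym.
Qed.

Lemma card_le1_eq (T : finType) (A : {set T}) (a b : T) : #|A| <= 1 -> a \in A -> b \in A -> a = b.
Proof. by move=> /card_le1_eqP H aA bA; apply: H. Qed.

Section Prime.
Variable P : lgraph V.
Hypothesis HP : Inv P.
Hypothesis Pc : connected_on (lverts P) (ladj P).
Hypothesis Pp : lprime P.
Hypothesis n4 : 4 <= #|lverts P|.
Hypothesis Gc : Gconn.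

Let L := lverts P.

Lemma ladj_irr u : u \in L -> ladj P u u = false.
Proof. by move=> uL; rewrite (inv_adj HP) // eqxx. Qed.

Lemma has_nbr u : u \in L -> exists2 w, w \in L & ladj P u w.
Proof.
move=> uL.
have : 1 < #|L :\ u| by rewrite /L; have := n4; rewrite (cardsD1 u) uL; lia.
case/card_gt1P => w0 [w1 [w0L _ _]].
move: w0L; rewrite in_setD1 => /andP[nw0u w0L].
move: Pc => /forallP/(_ u); rewrite uL => /forallP/(_ w0); rewrite w0L /=.
move=> /connectP[[|w p] /= pth Ew0]; first by rewrite Ew0 eqxx in nw0u.
by move: pth => /andP[/and3P[_ wL h] _]; exists w.
Qed.

Lemma F_inter u w x y : u \in L -> w \in L -> x \in u -> y \in w -> u != w -> e x y ->
  [/\ x \in act e u, y \in act e w & ladj P u w].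
Proof.
move=> uL wL xu yw neq exy.
have yu : y \notin u.
  by apply/negP => yu; have := inv_eq HP uL wL yu yw => E; rewrite E eqxx in neq.
have xw : x \notin w.
  by apply/negP => xw; have := inv_eq HP uL wL xu xw => E; rewrite E eqxx in neq.
split.
- by apply/actP; split => //; exists y.
- by apply/actP; split => //; exists x => //; rewrite e_sym.
- by rewrite (inv_adj HP) // neq; apply/crossP; exists x, y.
Qed.

Lemma F_compl u w x y : u \in L -> w \in L -> ladj P u w -> x \in act e u -> y \in act e w -> e x y.
Proof.
move=> uL wL; rewrite (inv_adj HP) // => /andP[neq c].
exact: (inv_cmp HP uL wL neq c).
Qed.

Lemma act_ne u : u \in L -> exists x, x \in act e u.
Proof.
move=> uL; case: (has_nbr uL) => w wL adj.
move: (adj); rewrite (inv_adj HP) // => /andP[neq /crossP[x [y [xu yw exy]]]].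
by case: (F_inter uL wL xu yw neq exy) => xa _ _; exists x.
Qed.

Lemma pair_split u1 u2 : u1 \in L -> u2 \in L -> u1 != u2 ->
  (forall w, w \in L -> w != u1 -> w != u2 -> ladj P u1 w = ladj P u2 w) \/
  (forall w, w \in L -> w != u2 -> ~~ ladj P u1 w) -> False.
Proof.
move=> u1L u2L neq H.
apply: (negP (Pp [set u1; u2])).
have sub : [set u1; u2] \subset L by apply/subsetP => w /set2P[->|->].
apply/and5P; split => //.
- by rewrite cards2 neq.
- rewrite cardsD; have : #|L :&: [set u1; u2]| <= 2.
    by apply: leq_trans (subset_leq_card (subsetIr _ _)) _; rewrite cards2 neq.
  have := n4; rewrite /L; lia.
apply/forallP => x; apply/implyP => /set2P xE; apply/forallP => x'; apply/implyP => /set2P x'E.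
apply/implyP => /andP[/existsP[y /andP[yD ey]] /existsP[y' /andP[y'D ey']]].
have yL : forall c, c \in L :\: [set u1; u2] -> [/\ c \in L, c != u1 & c != u2].
  by move=> c; rewrite !inE negb_or => /andP[/andP[]]; split.
case: (eqVneq x x') => [->//|nxx'].
case: H => [H|H].
  apply/eqP/setP => c; rewrite !inE.
  case zin: (c \in L); rewrite ?andbF ?andbT //.
  case: (eqVneq c u1) => [//|nz1]; case: (eqVneq c u2) => [//|nz2] /=.
  have := H c zin nz1 nz2.
  by case: xE => ->; case: x'E => -> //= ->; rewrite eqxx in nxx'.
exfalso.
have [c zD ez] : exists2 c, c \in L :\: [set u1; u2] & ladj P u1 c.
  case: xE => Ex; first by exists y => //; rewrite -Ex.
  case: x'E => Ex'; first by exists y' => //; rewrite -Ex'.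
  by rewrite Ex Ex' eqxx in nxx'.
case: (yL c zD) => zL _ nz2.
by have := H c zL nz2; rewrite ez.
Qed.

Lemma no_pendant u : u \in L -> exists w1 w2, [/\ w1 \in L, w2 \in L, w1 != w2,
  ladj P u w1 & ladj P u w2].
Proof.
move=> uL; case: (has_nbr uL) => c zL uz.
have nuz : u != c by apply: contraTneq uz => ->; rewrite ladj_irr.
case b : [exists w in L, (w != c) && ladj P u w].
  case/existsP: b => w /and3P[wL nwz uw].
  by exists w, c; split.
exfalso; apply: (pair_split uL zL nuz); right => w wL nwz.
by apply: contraFN b => uw; apply/existsP; exists w; rewrite wL nwz.
Qed.

Section SplitX.
Variable X : {set V}.
Hypothesis HX : SP X.
Variables x0 y0 : V.
Hypothesis x0X : x0 \in X.
Hypothesis y0X : y0 \notin X.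

Let UB := [set u in L | act e u \subset ~: X].
Let UA := L :\: UB.

Lemma UB_L : UB \subset L.
Proof. by apply/subsetP => u; rewrite inE => /andP[]. Qed.

Lemma UA_ex u : u \in UA -> exists2 x, x \in act e u & x \in X.
Proof.
rewrite !inE => /andP[H uL]; move: H; rewrite uL /= => /subsetPn[x xa].
by rewrite inE negbK => xX; exists x.
Qed.

Lemma UB_out u x : u \in UB -> x \in act e u -> x \notin X.
Proof. by rewrite inE => /andP[_ /subsetP H] /H; rewrite inE. Qed.

Lemma PS : 2 <= #|UA| -> 2 <= #|UB| -> False.
Proof.
move=> A2 B2; apply: (negP (Pp UA)).
have UAL : UA \subset L by apply: subsetDl.
have LUA : lverts P :\: UA = UB by apply: setDDA; apply: UB_L.
apply/and5P; split => //; first by rewrite LUA.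
apply/forallP => z; apply/implyP => zA; apply/forallP => z'; apply/implyP => z'A.
apply/implyP; rewrite LUA => /andP[/existsP[w0 /andP[w0B zw0]] /existsP[w0' /andP[w0'B zw0']]].
have UBL := subsetP UB_L.
have UAL' := subsetP UAL.
have key : forall z w0, z \in UA -> w0 \in UB -> ladj P z w0 -> forall w, w \in UB ->
    ladj P z w = [exists t in act e w, exists s in X, e s t].
  move=> z1 w1 z1A w1B zw1 w wB.
  case: (UA_ex z1A) => x xa xX.
  case: (act_ne (UBL _ w1B)) => q qa.
  have exq : e x q := F_compl (UAL' _ z1A) (UBL _ w1B) zw1 xa qa.
  apply/idP/idP => [zw|/existsP[t /andP[ta /existsP[s /andP[sX est]]]]].
    case: (act_ne (UBL _ wB)) => t ta; apply/existsP; exists t; rewrite ta.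
    by apply/existsP; exists x; rewrite xX (F_compl (UAL' _ z1A) (UBL _ wB) zw xa ta).
  have ext : e x t := HX xX sX (UB_out w1B qa) (UB_out wB ta) exq est.
  have nzw : z1 != w by apply: contraTneq z1A => ->; rewrite in_setD wB.
  have [_ _ ->] // := F_inter (UAL' _ z1A) (UBL _ wB) (subsetP (act_sub _) _ xa)
     (subsetP (act_sub _) _ ta) nzw ext.
apply/eqP/setP => w; rewrite !in_set.
case wL: (w \in L); case wB': (act e w \subset ~: X) => //=.
have wB : w \in UB by rewrite inE wL wB'.
by rewrite (key z w0) // (key z' w0').
Qed.

Lemma T_in z x : z \in UB -> x \in X -> x \in z ->
  (forall y x', y \notin X -> x' \in X -> e x' y -> y \in z) /\
  exists s t, [/\ s \in X, t \notin X & e s t].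
Proof.
move=> zB xX xz.
have zL := subsetP UB_L _ zB.
have esym : connect_sym e by apply: sym_connect_sym.
case b : [exists s in X :&: z, exists t in ~: X, e s t]; last first.
  exfalso.
  have cl : closed e (X :&: z).
    apply: intro_closed => // s v esv; rewrite inE => /andP[sX sz].
    have vX : v \in X.
      apply: contraFT b => vX; apply/existsP; exists s; rewrite inE sX sz /=.
      by apply/existsP; exists v; rewrite inE vX.
    rewrite inE vX /=; apply: contraTT sX => vz.
    by apply: (UB_out zB); apply/actP; split => //; exists v.
  have := closed_connect cl (Gc x y0).
  by rewrite !inE xX xz (negbTE y0X).
case/existsP: b => s /andP[]; rewrite inE => /andP[sX sz] /existsP[t /andP[]].
rewrite inE => tX est.
split; last by exists s, t.
move=> y x' yX x'X ex'y.
have esy : e s y := HX sX x'X tX yX est ex'y.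
apply: contraTT sX => yz.
by apply: (UB_out zB); apply/actP; split => //; exists y.
Qed.

Lemma XA_aux zb xb zo xo : zb \in UB -> xb \in X -> xb \in zb -> zo \in L -> xo \in X -> xo \in zo ->
  zo != zb -> #|UA| <= 1 -> False.
Proof.
move=> zbB xbX xbz zoL xoX xoz nob UA1.
have zbL := subsetP UB_L _ zbB.
have [Tz [s [t [sX tX est]]]] := T_in zbB xbX xbz.
case zoB : (zo \in UB).
  have [Tz' _] := T_in zoB xoX xoz.
  have := inv_eq HP zbL zoL (Tz t s tX sX est) (Tz' t s tX sX est).
  by move=> E; rewrite E eqxx in nob.
have zoA : zo \in UA by rewrite in_setD zoB zoL.
have esym : connect_sym e by apply: sym_connect_sym.
case b : [exists q in X :&: zo, exists r in ~: X, e q r]; last first.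
  have cl : closed e (X :&: zo).
    apply: intro_closed => // q v eqv; rewrite inE => /andP[qX qz].
    have vX : v \in X.
      apply: contraFT b => vX; apply/existsP; exists q; rewrite inE qX qz /=.
      by apply/existsP; exists v; rewrite inE vX.
    rewrite inE vX /=; apply/negPn/negP => vz.
    case: (inv_cov HP v) => w wL vw.
    have nzw : zo != w by apply: contraNneq vz => ->.
    have [_ va _] := F_inter zoL wL qz vw nzw eqv.
    have wB : w \in UB.
      apply/negPn/negP => wnB.
      have wA : w \in UA by rewrite in_setD wnB wL.
      by rewrite (card_le1_eq UA1 zoA wA) eqxx in nzw.
    by rewrite (negbTE (UB_out wB va)) in vX.
  have := closed_connect cl (Gc xo y0).
  by rewrite !inE xoX xoz (negbTE y0X).
case/existsP: b => q /andP[]; rewrite inE => /andP[qX qz] /existsP[r /andP[]].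
rewrite inE => rX eqr.
have rz := Tz r q rX qX eqr.
have [qa _ adj] := F_inter zoL zbL qz rz nob eqr.
case: (no_pendant zoL) => w1 [w2 [w1L w2L n12 a1 a2]].
have [w [wL nwb aw]] : exists w, [/\ w \in L, w != zb & ladj P zo w].
  case: (eqVneq w1 zb) => [E1|n1]; last by exists w1.
  by exists w2; split => //; rewrite -E1 eq_sym.
have nwo : zo != w by apply: contraTneq aw => <-; rewrite ladj_irr.
have wB : w \in UB.
  apply/negPn/negP => wnB.
  have wA : w \in UA by rewrite in_setD wnB wL.
  by rewrite (card_le1_eq UA1 zoA wA) eqxx in nwo.
case: (act_ne wL) => r' r'a.
have eqr' := F_compl zoL wL aw qa r'a.
have r'z := Tz r' q (UB_out wB r'a) qX eqr'.
have := inv_eq HP wL zbL (subsetP (act_sub _) _ r'a) r'z.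
by move=> E; rewrite E eqxx in nwb.
Qed.

Lemma XA : #|UA| <= 1 -> exists2 u, u \in L & X \subset u.
Proof.
move=> UA1.
case: (inv_cov HP x0) => z0 z0L x0z.
exists z0 => //; apply/subsetP => x1 x1X.
case: (inv_cov HP x1) => z1 z1L x1z.
case: (eqVneq z1 z0) => [<-//|n10].
exfalso.
case z0B : (z0 \in UB).
  exact: (XA_aux z0B x0X x0z z1L x1X x1z n10 UA1).
case z1B : (z1 \in UB).
  by apply: (XA_aux z1B x1X x1z z0L x0X x0z _ UA1); rewrite eq_sym.
have z0A : z0 \in UA by rewrite in_setD z0B z0L.
have z1A : z1 \in UA by rewrite in_setD z1B z1L.
by rewrite (card_le1_eq UA1 z0A z1A) eqxx in n10.
Qed.

End SplitX.

Lemma Mixed X : SP X -> #|[set u in L | act e u \subset ~: X]| <= 1 ->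
  #|[set u in L | act e u \subset X]| <= 1 -> False.
Proof.
move=> HX B1 B1'.
set UB := [set u in L | act e u \subset ~: X] in B1.
set UB' := [set u in L | act e u \subset X] in B1'.
have : 1 < #|L :\: (UB :|: UB')|.
  rewrite cardsD; have : #|L :&: (UB :|: UB')| <= #|UB| + #|UB'|.
    apply: leq_trans (subset_leq_card (subsetIr _ _)) _; rewrite cardsU; lia.
  have := n4; rewrite /L; lia.
case/card_gt1P => u1 [u2 [u1M u2M n12]].
have Mfacts : forall u, u \in L :\: (UB :|: UB') ->
   [/\ u \in L, exists2 x, x \in act e u & x \in X & exists2 y, y \in act e u & y \notin X].
  move=> u; rewrite !inE negb_or => /andP[/andP[H1 H2] uL]; move: H1 H2; rewrite uL /=.
  move=> /subsetPn[x xa xX] /subsetPn[y ya yX]; split => //.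
    by exists x => //; move: xX; rewrite inE negbK.
  by exists y.
have FA : forall u, u \in L :\: (UB :|: UB') ->
   (forall x, x \in act e u -> x \in X -> exists2 g, g \notin X & e x g) /\
   (forall y, y \in act e u -> y \notin X -> exists2 h, h \in X & e h y).
  move=> u uM; have [uL _ _] := Mfacts u uM.
  case: (no_pendant uL) => w1 [w2 [w1L w2L n12' a1 a2]].
  split.
  - move=> x xa xX.
    have [w [wL aw wnB]] : exists w, [/\ w \in L, ladj P u w & w \notin UB'].
      case w1B : (w1 \in UB'); last by exists w1; rewrite w1B.
      case w2B : (w2 \in UB'); last by exists w2; rewrite w2B.
      by rewrite (card_le1_eq B1' w1B w2B) eqxx in n12'.
    move: wnB; rewrite inE wL /= => /subsetPn[q qa qX].
    by exists q => //; apply: (F_compl uL wL aw xa qa).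
  - move=> y ya yX.
    have [w [wL aw wnB]] : exists w, [/\ w \in L, ladj P u w & w \notin UB].
      case w1B : (w1 \in UB); last by exists w1; rewrite w1B.
      case w2B : (w2 \in UB); last by exists w2; rewrite w2B.
      by rewrite (card_le1_eq B1 w1B w2B) eqxx in n12'.
    move: wnB; rewrite inE wL /= => /subsetPn[q qa]; rewrite inE negbK => qX.
    by exists q => //; rewrite e_sym; apply: (F_compl uL wL aw ya qa).
have dir : forall (v1 v2 w : {set V}), v1 \in L :\: (UB :|: UB') -> v2 \in L :\: (UB :|: UB') ->
    w \in L -> w != v1 -> w != v2 -> ladj P v1 w -> ladj P v2 w.
  move=> v1 v2 w v1M v2M wL nw1 nw2 a1.
  have [v1L [x1 x1a x1X] [y1 y1a y1X]] := Mfacts v1 v1M.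
  have [v2L [x2 x2a x2X] [y2 y2a y2X]] := Mfacts v2 v2M.
  have [FA2a FA2b] := FA v2 v2M.
  case: (act_ne wL) => q qa.
  have a1' : ladj P w v1 by rewrite (inv_adjC HP).
  have eqx1 := F_compl wL v1L a1' qa x1a.
  have eqy1 := F_compl wL v1L a1' qa y1a.
  have qw := subsetP (act_sub _) _ qa.
  case qX : (q \in X).
    case: (FA2b y2 y2a y2X) => h hX ehy.
    have eqy2 : e q y2 := HX q h y1 y2 qX hX y1X y2X eqy1 ehy.
    have [_ _ adj] := F_inter wL v2L qw (subsetP (act_sub _) _ y2a) nw2 eqy2.
    by rewrite (inv_adjC HP).
  case: (FA2a x2 x2a x2X) => g gX exg.
  have ex2q : e x2 q.
    apply: (HX x2 x1 g q x2X x1X gX (negbT qX) exg); by rewrite e_sym.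
  have nv2w : v2 != w by rewrite eq_sym.
  by have [_ _ adj] := F_inter v2L wL (subsetP (act_sub _) _ x2a) qw nv2w ex2q.
have u1L : u1 \in L by move: u1M; rewrite inE => /andP[].
have u2L : u2 \in L by move: u2M; rewrite inE => /andP[].
apply: (pair_split u1L u2L n12); left => w wL nw1 nw2.
apply/idP/idP; [exact: dir u1M u2M wL nw1 nw2 | exact: dir u2M u1M wL nw2 nw1].
Qed.

Lemma Sprime X x0 y0 : SP X -> x0 \in X -> y0 \notin X ->
  exists2 u, u \in L & (X \subset u) || (~: X \subset u).
Proof.
move=> HX x0X y0X.
have cardUA : forall Y : {set V}, #|L :\: [set u in L | act e u \subset ~: Y]| +
    #|[set u in L | act e u \subset ~: Y]| = #|L|.
  move=> Y; rewrite cardsDS; last by apply/subsetP => u; rewrite inE => /andP[].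
  have : #|[set u in L | act e u \subset ~: Y]| <= #|L|.
    by apply: subset_leq_card; apply/subsetP => u; rewrite inE => /andP[].
  lia.
case: (leqP #|L :\: [set u in L | act e u \subset ~: X]| 1) => [A1|A2].
  by case: (XA HX x0X y0X A1) => u uL sub; exists u; rewrite ?sub.
have B1 : #|[set u in L | act e u \subset ~: X]| <= 1.
  rewrite leqNgt; apply/negP => B2; exact: (PS HX A2 B2).
have HX' := SPC HX.
have y0X' : y0 \in ~: X by rewrite inE.
have x0X' : x0 \notin ~: X by rewrite inE negbK.
case: (leqP #|L :\: [set u in L | act e u \subset ~: ~: X]| 1) => [A1|A2'].
  by case: (XA HX' y0X' x0X' A1) => u uL sub; exists u; rewrite ?sub ?orbT.
have B1' : #|[set u in L | act e u \subset ~: ~: X]| <= 1.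
  rewrite leqNgt; apply/negP => B2; exact: (PS HX' A2' B2).
rewrite setCK in B1'.
exfalso; exact: (Mixed HX B1 B1').
Qed.

End Prime.

Lemma inj_into (A B : {set V}) : #|A| <= #|B| ->
  exists f : V -> V, {in A &, injective f} /\ (forall a, a \in A -> f a \in B).
Proof.
move=> AB.
exists (fun a => nth a (enum B) (index a (enum A))); split.
  move=> a1 a2 a1A a2A /= E.
  have i1 : index a1 (enum A) < size (enum B).
    by rewrite -cardE; apply: leq_trans AB; rewrite cardE index_mem mem_enum.
  have i2 : index a2 (enum A) < size (enum B).
    by rewrite -cardE; apply: leq_trans AB; rewrite cardE index_mem mem_enum.
  move: E; rewrite (set_nth_default a1 a2 i2) => /eqP.
  rewrite nth_uniq ?enum_uniq // => /eqP Ei.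
  have h1 : nth a1 (enum A) (index a1 (enum A)) = a1 by apply: nth_index; rewrite mem_enum.
  have h2 : nth a1 (enum A) (index a2 (enum A)) = a2 by apply: nth_index; rewrite mem_enum.
  by apply: (etrans (esym h1)); rewrite Ei h2.
move=> a aA; rewrite -mem_enum mem_nth // -cardE.
by apply: leq_trans AB; rewrite cardE index_mem mem_enum.
Qed.

Definition matching_in (C : {set V}) (M : {set V * V}) (S T : {set V}) :=
  matching_across e C M /\ (forall p, p \in M -> p.1 \in S /\ p.2 \in T).

Lemma mm_ge C M : matching_across e C M -> #|M| <= mm e C.
Proof. by move=> H; rewrite /mm; apply: leq_bigmax_cond. Qed.

Lemma complete_match (C S T : {set V}) : S \subset C -> T \subset ~: C ->
  (forall s t, s \in S -> t \in T -> e s t) ->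
  exists M, [/\ matching_in C M S T & minn #|S| #|T| <= #|M|].
Proof.
move=> SC TC Hc.
case: (leqP #|S| #|T|) => [ST|TS].
  case: (inj_into ST) => f [finj fST].
  exists [set (s, f s) | s in S]; split; last first.
    by rewrite card_in_imset // => s1 s2 _ _ [].
  split; last by move=> p /imsetP[s sS ->] /=; split => //; apply: fST.
  apply/andP; split.
    apply/forallP => p; apply/implyP => /imsetP[s sS ->] /=.
    rewrite (subsetP SC) //= (Hc _ _ sS (fST _ sS)) andbT.
    by have := subsetP TC _ (fST _ sS); rewrite inE.
  apply/forallP => p; apply/implyP => /imsetP[s sS ->]; apply/forallP => q.
  apply/implyP => /imsetP[s' s'S ->] /=; apply/implyP => neq.
  have nss : s != s' by apply: contraNneq neq => ->.
  rewrite nss /=; apply: contraNneq nss => E; apply/eqP; exact: finj E.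
have TS' : #|T| <= #|S| by apply: ltnW.
case: (inj_into TS') => f [finj fTS].
exists [set (f t, t) | t in T]; split; last first.
  by rewrite card_in_imset // => s1 s2 _ _ [].
split; last by move=> p /imsetP[s sS ->] /=; split => //; apply: fTS.
apply/andP; split.
  apply/forallP => p; apply/implyP => /imsetP[s sS ->] /=.
  rewrite (subsetP SC) ?fTS //= (Hc _ _ (fTS _ sS) sS) andbT.
  by have := subsetP TC _ sS; rewrite inE.
apply/forallP => p; apply/implyP => /imsetP[s sS ->]; apply/forallP => q.
apply/implyP => /imsetP[s' s'S ->] /=; apply/implyP => neq.
have nss : s != s' by apply: contraNneq neq => ->.
rewrite nss andbT; apply: contraNneq nss => E; apply/eqP; exact: finj E.
Qed.

Lemma match_union C M1 M2 S1 T1 S2 T2 : matching_in C M1 S1 T1 -> matching_in C M2 S2 T2 ->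
  [disjoint S1 & S2] -> [disjoint T1 & T2] ->
  matching_across e C (M1 :|: M2) /\ #|M1 :|: M2| = #|M1| + #|M2|.
Proof.
move=> [/andP[/forallP m1a /forallP m1b] s1] [/andP[/forallP m2a /forallP m2b] s2] dS dT.
have dM : [disjoint M1 & M2].
  rewrite -setI_eq0; apply/eqP/setP => p; rewrite !inE.
  apply/negbTE/negP => /andP[/s1[p1 _] /s2[p2 _]].
  by have := disjointFr dS p1; rewrite p2.
split; last by rewrite cardsU (disjoint_setI0 dM) cards0 subn0.
apply/andP; split.
  apply/forallP => p; apply/implyP => /setUP[pM|pM].
    by have := m1a p; rewrite pM.
  by have := m2a p; rewrite pM.
have cross12 : forall p q, p \in M1 -> q \in M2 -> (p.1 != q.1) && (p.2 != q.2).
  move=> p q pM qM; have [p1 p2] := s1 _ pM; have [q1 q2] := s2 _ qM.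
  apply/andP; split.
    by apply: contraTneq p1 => ->; rewrite (disjointFl dS q1).
  by apply: contraTneq p2 => ->; rewrite (disjointFl dT q2).
apply/forallP => p; apply/implyP => /setUP[pM|pM]; apply/forallP => q;
  apply/implyP => /setUP[qM|qM]; apply/implyP => neq.
- by have := m1b p; rewrite pM => /forallP/(_ q); rewrite qM neq.
- exact: cross12.
- by rewrite eq_sym (eq_sym p.2); apply: cross12.
- by have := m2b p; rewrite pM => /forallP/(_ q); rewrite qM neq.
Qed.

End Blocks.

Section Tree.
Variables (V W : finType) (t : rel W) (delta : W -> V).
Hypothesis HT : branch_decomp t delta.

Let tsym : symmetric t. Proof. by case: HT => [[]]. Qed.
Let tirr : irreflexive t. Proof. by case: HT => [[]]. Qed.
Let tconn : forall x y, connect t x y. Proof. by case: HT => [[]]. Qed.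
Let tacyc : acyclic t. Proof. by case: HT => [[]]. Qed.

Notation tm := (t_minus t).

Lemma tm_sub x y u w : tm x y u w -> t u w.
Proof. by case/andP. Qed.

Lemma tm_sym x y : symmetric (tm x y).
Proof.
move=> u w; rewrite /t_minus tsym; congr (_ && ~~ _).
by case: (u == x); case: (w == y); case: (u == y); case: (w == x).
Qed.

Lemma tm_swap x y : tm x y =2 tm y x.
Proof.
move=> u w; rewrite /t_minus; congr (_ && ~~ _); by rewrite orbC.
Qed.

Lemma tneq x y : t x y -> x != y.
Proof. by apply: contraTneq => ->; rewrite tirr. Qed.

Lemma T1 x y : t x y -> ~~ connect (tm x y) x y.
Proof.
move=> txy; apply/negP => /connectP[p pth Ey].
case: (shortenP pth) Ey => p' pth' Up' _ Ey.
case: p' pth' Up' Ey => [|z q] /=; first by move=> _ _ E; rewrite E tirr in txy.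
move=> /andP[tz pq] Uq Ey.
case: q pq Uq Ey => [|z' q'] pq Uq Ey.
  by move: tz; rewrite Ey /= /t_minus !eqxx andbF.
apply: tacyc; exists [:: x, z, z' & q']; apply/and3P; split => //.
rewrite /cycle rcons_path; apply/andP; split.
  rewrite /= (tm_sub tz) /=; exact: (sub_path (@tm_sub x y) pq).
by move: Ey; rewrite /= => <-; rewrite tsym.
Qed.

Definition txv (x : W) : rel W := fun u v => [&& t u v, u != x & v != x].

Lemma txv_sym x : symmetric (txv x).
Proof. by move=> u v; rewrite /txv tsym; case: (t v u); case: (u != x); case: (v != x). Qed.

Lemma avoid a x w : t a x -> connect (tm a x) a w -> connect (txv x) a w.
Proof.
move=> tax /connectP[p pth ->]; apply/connectP; exists p => //.
have Pall : all [pred u | u != x] (a :: p).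
  apply/allP => c cin; rewrite /=; apply: contraTneq (path_connect pth cin) => ->.
  exact: T1.
apply: (sub_in_path _ Pall pth) => u v; rewrite !inE => ux vx /tm_sub tuv.
by rewrite /txv tuv ux vx.
Qed.

Lemma txv_sub b x : subrel (txv x) (tm b x).
Proof.
move=> u v /and3P[tuv ux vx]; rewrite /t_minus tuv /=.
by rewrite (negbTE vx) (negbTE ux) !andbF.
Qed.

Lemma txv_sub2 x y : subrel (txv x) (tm x y).
Proof.
move=> u v /and3P[tuv ux vx]; rewrite /t_minus tuv /=.
by rewrite (negbTE vx) (negbTE ux) !andbF.
Qed.

Lemma T2 x y w : t x y -> connect (tm x y) x w || connect (tm x y) y w.
Proof.
move=> txy.
have csym : connect_sym t by apply: sym_connect_sym.
have csym' : connect_sym (tm x y) by apply: sym_connect_sym; apply: tm_sym.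
pose a := [pred u | connect (tm x y) x u || connect (tm x y) y u].
have cl : closed t a.
  apply: intro_closed => // u v tuv /orP ua.
  case tm_uv : (tm x y u v).
    by apply/orP; case: ua => h; [left|right]; apply: connect_trans h (connect1 tm_uv).
  move: tm_uv; rewrite /t_minus tuv /= => /negbFE /orP[] /andP[_ /eqP->].
    by apply/orP; right.
  by apply/orP; left.
have xa : x \in a by apply/orP; left.
by have := closed_connect cl (tconn x w); rewrite xa => /esym.
Qed.

Lemma T_excl x y w : t x y -> connect (tm x y) x w -> connect (tm x y) y w -> False.
Proof.
move=> txy cx cy.
have csym' : connect_sym (tm x y) by apply: sym_connect_sym; apply: tm_sym.
by move/negP: (T1 txy); apply; apply: connect_trans cx _; rewrite csym'.
Qed.

Lemma leaf_of v : exists2 l, leaf t l & delta l = v.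
Proof. by case: HT => _ _ _ H; apply: H. Qed.

Lemma leaf_inj l1 l2 : leaf t l1 -> leaf t l2 -> delta l1 = delta l2 -> l1 = l2.
Proof. by case: HT => _ _ H _; apply: H. Qed.

Lemma in_cut x y v : (v \in cut t delta x y) =
  [exists l, [&& leaf t l, delta l == v & connect (tm x y) x l]].
Proof. by rewrite inE. Qed.

Lemma in_cut_leaf x y l : leaf t l -> (delta l \in cut t delta x y) = connect (tm x y) x l.
Proof.
move=> ll; rewrite in_cut; apply/existsP/idP => [[l' /and3P[ll' /eqP E c]]|c].
  by rewrite -(leaf_inj ll' ll E).
by exists l; rewrite ll eqxx c.
Qed.

Lemma cut_compl x y : t x y -> cut t delta y x = ~: cut t delta x y.
Proof.
move=> txy; apply/setP => v; case: (leaf_of v) => l ll <-.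
rewrite in_setC !in_cut_leaf // (eq_connect (tm_swap y x)).
have := T2 l txy; have := @T_excl x y l txy.
by case: (connect (tm x y) x l); case: (connect (tm x y) y l) => // H _; exfalso; apply: H.
Qed.

Lemma leaf_only x y z : leaf t x -> t x y -> t x z -> z = y.
Proof.
move=> /eqP d1 txy txz.
have : [set w | t x w] = [set y].
  apply/eqP; rewrite eq_sym eqEcard sub1set inE txy /= cards1; by rewrite /deg in d1; rewrite d1.
by move/setP/(_ z); rewrite !inE txz => /esym/eqP.
Qed.

Lemma cut_leaf x y : t x y -> leaf t x -> cut t delta x y = [set delta x].
Proof.
move=> txy lx; apply/setP => v; case: (leaf_of v) => l ll <-.
rewrite in_cut_leaf // inE.
have csym' : connect_sym (tm x y) by apply: sym_connect_sym; apply: tm_sym.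
apply/idP/idP => [c|/eqP E]; last by rewrite (leaf_inj ll lx E).
have cl : closed (tm x y) [pred u | u == x].
  apply: intro_closed => // u w tuw /eqP Eu; move: tuw; rewrite Eu => tw.
  have := leaf_only lx txy (tm_sub tw) => Ew; move: tw; rewrite Ew /t_minus !eqxx.
  by rewrite andbF.
by have := closed_connect cl c; rewrite !inE eqxx => /esym/eqP->.
Qed.

Lemma conn_child x y x' w : t x y -> t x x' -> x' != y -> connect (tm x' x) x' w ->
  connect (tm x y) x w.
Proof.
move=> txy txx' nx'y c.
have tx'x : t x' x by rewrite tsym.
have c' := avoid tx'x c.
apply: (@connect_trans _ _ x' x w (connect1 _)).
  rewrite /t_minus txx' /= eqxx /= (negbTE nx'y) /=.
  by rewrite (negbTE (tneq txy)).
exact: (connect_sub (fun u v h => connect1 (txv_sub2 y h)) c').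
Qed.

Lemma conn_parent x y w : t x y -> connect (tm x y) x w -> w != x ->
  exists x', [/\ t x x', x' != y & connect (tm x' x) x' w].
Proof.
move=> txy /connectP[p pth Ew] nwx.
case: (shortenP pth) Ew => p' pth' Up' _ Ew.
case: p' pth' Up' Ew => [|x' q] /=; first by move=> _ _ E; rewrite E eqxx in nwx.
move=> /andP[tx' pq] /andP[xnin Uq] Ew.
have tx'x := tm_sub tx'.
have nx'y : x' != y.
  by apply: contraTneq tx' => ->; rewrite /t_minus !eqxx /= andbF.
exists x'; split => //; apply/connectP; exists q => //.
have Pall : all [pred u | u != x] (x' :: q).
  by apply/allP => c cin /=; apply: contraNneq xnin => <-.
apply: (sub_in_path _ Pall pq) => u v; rewrite !inE => ux vx /tm_sub tuv.
exact: (txv_sub x' (introT and3P (And3 tuv ux vx))).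
Qed.

Definition comp x y := [set w | connect (tm x y) x w].

Lemma comp_lt x y x' : t x y -> t x x' -> x' != y -> #|comp x' x| < #|comp x y|.
Proof.
move=> txy txx' nx'y; apply: proper_card; apply/properP; split.
  by apply/subsetP => w; rewrite !inE; apply: conn_child.
exists x; first by rewrite inE connect0.
have tx'x : t x' x by rewrite tsym.
by rewrite inE; apply: T1.
Qed.

Lemma child_disj x x1 x2 v : t x x1 -> t x x2 -> x1 != x2 ->
  v \in cut t delta x1 x -> v \in cut t delta x2 x -> False.
Proof.
move=> t1 t2 n12; case: (leaf_of v) => l ll <-; rewrite !in_cut_leaf // => c1 c2.
have t1' : t x1 x by rewrite tsym.
have t2' : t x2 x by rewrite tsym.
have a1 := avoid t1' c1; have a2 := avoid t2' c2.
have csym : connect_sym (txv x) by apply: sym_connect_sym; apply: txv_sym.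
have c12 : connect (txv x) x1 x2 by apply: connect_trans a1 _; rewrite csym.
have : connect (tm x1 x) x1 x.
  apply: connect_trans (connect_sub (fun u v h => connect1 (txv_sub x1 h)) c12) (connect1 _).
  rewrite /t_minus t2' /= eq_sym (negbTE n12) /=.
  by rewrite eq_sym (negbTE (tneq t2)).
by apply/negP; apply: T1.
Qed.

Lemma cut_split x y v : t x y -> ~~ leaf t x ->
  (v \in cut t delta x y) = [exists x', [&& t x x', x' != y & v \in cut t delta x' x]].
Proof.
move=> txy nl; case: (leaf_of v) => l ll <-; rewrite in_cut_leaf //.
apply/idP/existsP => [c|[x' /and3P[txx' nx'y]]]; last first.
  by rewrite in_cut_leaf //; apply: conn_child.
have nlx : l != x by apply: contraNneq nl => <-.
case: (conn_parent txy c nlx) => x' [txx' nx'y c'].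
by exists x'; rewrite txx' nx'y in_cut_leaf.
Qed.

Lemma children x y : t x y -> ~~ leaf t x ->
  exists x1 x2, [/\ t x x1, t x x2, x1 != y, x2 != y &
     forall x', t x x' -> x' != y -> x' = x1 \/ x' = x2].
Proof.
move=> txy nl.
have d3 : deg t x <= 3 by case: HT => _ H _ _; apply: H.
set N := [set w | t x w] in d3 *.
have yN : y \in N by rewrite inE.
have : 1 <= #|N :\ y| <= 2.
  move: d3 nl; rewrite /leaf /deg -/N (cardsD1 y N) yN; lia.
move=> /andP[c1 c2].
case/card_gt0P: c1 => x1 x1in.
move: (x1in); rewrite !inE => /andP[nx1y tx1].
case b : [exists x2 in N :\ y, x2 != x1].
  case/existsP: b => x2 /andP[x2in n21].
  move: (x2in); rewrite !inE => /andP[nx2y tx2].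
  exists x1, x2; split => // x' tx' nx'y.
  have x'in : x' \in N :\ y by rewrite !inE nx'y tx'.
  have : x' |: [set x1; x2] \subset N :\ y.
    by apply/subsetP => z /setU1P[->|/set2P[->|->]].
  move/subset_leq_card => H; move: (leq_trans H c2).
  rewrite cardsU1 cards2 eq_sym n21 !inE.
  case: (eqVneq x' x1) => [->|n1]; first by left.
  case: (eqVneq x' x2) => [->|n2]; first by right.
  by [].
exists x1, x1; split => // x' tx' nx'y; left.
apply/eqP; apply: contraFT b => n; apply/existsP; exists x'.
by rewrite !inE nx'y tx' n.
Qed.

End Tree.

Lemma cnt_disj (T : finType) (S X Y : {set T}) : [disjoint X & Y] ->
  #|S :&: (X :|: Y)| = #|S :&: X| + #|S :&: Y|.
Proof.
move=> d; rewrite setIUr cardsU.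
have -> : S :&: X :&: (S :&: Y) = set0.
  apply/setP => v; rewrite !inE; apply/negbTE/negP => /andP[/andP[_ vX] /andP[_ vY]].
  by have := disjointFr d vX; rewrite vY.
by rewrite cards0 subn0.
Qed.

Lemma cnt_C (T : finType) (S X : {set T}) : #|S :&: X| + #|S :&: ~: X| = #|S|.
Proof. by rewrite -setDE cardsID. Qed.

Lemma cnt_D (T : finType) (S X : {set T}) : #|S :\: X| = #|S :&: ~: X|.
Proof. by rewrite setDE. Qed.

Lemma ar_fm (k m1 m2 n1 n2 n sA sB : nat) : minn sA n1 <= m1 -> minn sB n2 <= m2 ->
  m1 + m2 < k -> n1 + n2 = n -> k <= sA -> k <= sB -> n < k.
Proof. lia. Qed.
Lemma ar_pos (k n p q : nat) : p + q = n -> q < 2 * k -> 3 * k <= n -> k < p.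
Proof. lia. Qed.
Lemma ar_sum (k n z q s1 s2 : nat) : z + q = n -> q < k -> 3 * k <= n -> z = s1 + s2 ->
  2 * k < s1 + s2.
Proof. lia. Qed.

Lemma ar_leaf (k n p q : nat) : p + q = n -> p <= 1 -> 3 * k <= n -> 0 < k -> q < 2 * k -> False.
Proof. lia. Qed.
Lemma ar_kb (k n q z d s1 s2 : nat) : s2 + q = n -> s1 + s2 = z -> z + d = n -> s1 < k -> d < k ->
  q < 2 * k.
Proof. lia. Qed.
Lemma ar_three (k n z d s1 s2 : nat) : s1 + s2 = z -> z + d = n -> s1 < k -> s2 < k -> d < k ->
  3 * k <= n -> False.
Proof. lia. Qed.
Lemma ar_two (k z s1 s2 : nat) : s1 + s2 = z -> s1 < k -> s2 < k -> z < 2 * k.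
Proof. lia. Qed.

Section Main.
Variables (V : finType) (e : rel V).
Hypotheses (e_sym : symmetric e) (e_irr : irreflexive e).
Variable P : lgraph V.
Hypotheses (HP : Inv e P) (Pc : connected_on (lverts P) (ladj P)) (Pp : lprime P)
  (n4 : 3 < #|lverts P|) (Gc : Gconn e).
Variables (W : finType) (t : rel W) (delta : W -> V).
Hypothesis HT : branch_decomp t delta.
Variable k : nat.
Hypothesis k_pos : 0 < k.
Hypothesis Hwidth : sm_width_lt e t delta k.
Variables a b : {set V}.
Hypotheses (aL : a \in lverts P) (bL : b \in lverts P) (ab : ladj P a b)
  (ha : 3 * k <= #|act e a|) (hb : 3 * k <= #|act e b|).

Notation A0 := (act e a).
Notation B0 := (act e b).
Notation L := (lverts P).
Notation cutt := (cut t delta).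

Lemma nab : a != b.
Proof. by move: ab; rewrite (inv_adj HP) // => /andP[]. Qed.

Lemma KC x y : x \in A0 -> y \in B0 -> e x y.
Proof. exact: (F_compl HP aL bL ab). Qed.

Lemma A0a x : x \in A0 -> x \in a.
Proof. exact: (subsetP (act_sub e_sym a)). Qed.
Lemma B0b x : x \in B0 -> x \in b.
Proof. exact: (subsetP (act_sub e_sym b)). Qed.

Lemma ab_disj x : x \in a -> x \in b -> False.
Proof. by move=> xa xb; have := inv_eq HP aL bL xa xb => E; have := nab; rewrite E eqxx. Qed.

Lemma R2 : exists c d, [/\ c \in L, d \in L, c != d,
  (forall v, v \in c -> v \notin a :|: b) & (forall v, v \in d -> v \notin a :|: b)].
Proof.
have : 1 < #|L :\: [set a; b]|.
  rewrite cardsD; have : #|L :&: [set a; b]| <= 2.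
    by apply: leq_trans (subset_leq_card (subsetIr _ _)) _; rewrite cards2 ltnS leq_b1.
  lia.
case/card_gt1P => c [d [cin din ncd]].
have out : forall u, u \in L :\: [set a; b] -> forall v, v \in u -> v \notin a :|: b.
  move=> u; rewrite !inE negb_or => /andP[/andP[nua nub] uL] v vu.
  rewrite !inE negb_or; apply/andP; split; apply/negP => vab.
    by have := inv_eq HP uL aL vu vab => E; rewrite E eqxx in nua.
  by have := inv_eq HP uL bL vu vab => E; rewrite E eqxx in nub.
exists c, d; split => //.
- by move: cin; rewrite inE => /andP[].
- by move: din; rewrite inE => /andP[].
- exact: out.
- exact: out.
Qed.

Lemma split_loc (C : {set V}) : is_split setT e C -> exists2 u, u \in L & (C \subset u) || (~: C \subset u).
Proof.
move=> Hs; have /and5P[_ C2 D2 _ _] := Hs.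
have : 0 < #|C| by apply: leq_trans C2.
case/card_gt0P => x0 x0C.
have : 0 < #|setT :\: C| by apply: leq_trans D2.
case/card_gt0P => y0; rewrite !inE andbT => y0C.
have n4' : 4 <= #|L| by [].
exact: (Sprime e_sym HP Pc Pp n4' Gc (split_SP Hs) x0C y0C).
Qed.

Lemma notC_sub (C : {set V}) u : C \subset a :|: b -> u \in L -> ~: C \subset u -> False.
Proof.
move=> Cab uL sub.
case: R2 => c [d [cL dL ncd cout dout]].
have inu : forall z, z \in L -> (forall v, v \in z -> v \notin a :|: b) -> z = u.
  move=> z zL zout; case/set0Pn: (inv_ne HP zL) => v vz.
  have vC : v \in ~: C.
    rewrite inE; apply: contra (zout v vz); exact: (subsetP Cab).
  exact: (inv_eq HP zL uL vz (subsetP sub _ vC)).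
by rewrite (inu c cL cout) (inu d dL dout) eqxx in ncd.
Qed.

Lemma pure_of (C : {set V}) : C \subset a :|: b -> is_split setT e C ->
  (A0 :&: C = set0) \/ (B0 :&: C = set0).
Proof.
move=> Cab Hs; case: (split_loc Hs) => u uL /orP[sub|sub]; last first.
  by exfalso; exact: (notC_sub Cab uL sub).
case: (set_0Vmem (A0 :&: C)) => [->|[v]]; first by left.
rewrite in_setI => /andP[vA vC]; right.
apply/setP => w; rewrite in_setI in_set0; apply/negbTE/negP => /andP[wB wC].
have := inv_eq HP aL uL (A0a vA) (subsetP sub _ vC) => Ea.
have := inv_eq HP bL uL (B0b wB) (subsetP sub _ wC) => Eb.
by have := nab; rewrite Ea Eb eqxx.
Qed.

Lemma mm_lt x y : t x y -> ~~ is_split setT e (cutt x y) -> mm e (cutt x y) < k.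
Proof. by move=> txy ns; have := Hwidth txy; rewrite /sm (negbTE ns). Qed.

Definition small (C : {set V}) := (#|A0 :&: C| < k) && (#|B0 :&: C| < k).

Lemma dich C : mm e C < k -> small C \/ (#|A0 :&: ~: C| < k /\ #|B0 :&: ~: C| < k).
Proof.
move=> Hm.
have [M1 [[m1 _] c1]] : exists M, [/\ matching_in e C M (A0 :&: C) (B0 :\: C)
     & minn #|A0 :&: C| #|B0 :\: C| <= #|M|].
  apply: complete_match; first exact: subsetIr.
    by apply/subsetP => v; rewrite !inE => /andP[].
  by move=> s u /setIP[sA _] /setDP[uB _]; apply: KC.
have [M2 [[m2 _] c2]] : exists M, [/\ matching_in e C M (B0 :&: C) (A0 :\: C)
     & minn #|B0 :&: C| #|A0 :\: C| <= #|M|].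
  apply: complete_match; first exact: subsetIr.
    by apply/subsetP => v; rewrite !inE => /andP[].
  by move=> s u /setIP[sB _] /setDP[uA _]; rewrite e_sym; apply: KC.
have h1 := leq_trans c1 (mm_ge m1); have h2 := leq_trans c2 (mm_ge m2).
have eA := cnt_C A0 C; have eB := cnt_C B0 C.
rewrite !cnt_D in h1 h2.
rewrite /small.
case: (ltnP #|A0 :&: C| k) => hA; case: (ltnP #|B0 :&: C| k) => hB.
- by left; apply/andP.
- exfalso; lia.
- exfalso; lia.
- right; lia.
Qed.

Lemma in_Nbhd (S : {set V}) w : (w \in Nbhd e S) = (w \notin S) && [exists x in S, e x w].
Proof. by rewrite /Nbhd in_setD inE. Qed.

Lemma A0_ne : exists v, v \in A0.
Proof. have : 0 < #|A0| by apply: leq_trans ha; lia. by case/card_gt0P => v; exists v. Qed.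
Lemma B0_ne : exists v, v \in B0.
Proof. have : 0 < #|B0| by apply: leq_trans hb; lia. by case/card_gt0P => v; exists v. Qed.

Lemma final_match (Ca Cb : {set V}) : is_split setT e Ca -> is_split setT e Cb ->
  [disjoint Ca & Cb] -> B0 :&: Ca = set0 -> A0 :&: Cb = set0 ->
  k <= #|A0 :&: Ca| -> k <= #|B0 :&: Cb| -> mm e (Ca :|: Cb) < k ->
  #|Nbhd e (Ca :|: Cb)| < k.
Proof.
move=> HsA HsB dab BCa ACb kA kB Hm.
set Z := Ca :|: Cb in Hm *.
set N := Nbhd e Z.
set N1 := N :&: Nbhd e Ca.
set N2 := N :\: Nbhd e Ca.
have SPA := split_SP HsA; have SPB := split_SP HsB.
have NZ : N \subset ~: Z by apply/subsetP => w; rewrite /N in_Nbhd in_setC => /andP[].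
have [M1 [m1 c1]] : exists M, [/\ matching_in e Z M (A0 :&: Ca) N1
     & minn #|A0 :&: Ca| #|N1| <= #|M|].
  apply: complete_match.
  - by apply/subsetP => v /setIP[_ vC]; rewrite inE vC.
  - by apply: subset_trans NZ; apply: subsetIl.
  move=> s w /setIP[sA sC] /setIP[_]; rewrite in_Nbhd => /andP[wC /existsP[c /andP[cC ecw]]].
  case: B0_ne => b0 b0B.
  have b0C : b0 \notin Ca.
    apply/negP => b0C; have : b0 \in B0 :&: Ca by rewrite in_setI b0B b0C.
    by rewrite BCa inE.
  exact: (SPA s c b0 w sC cC b0C wC (KC sA b0B) ecw).
have [M2 [m2 c2]] : exists M, [/\ matching_in e Z M (B0 :&: Cb) N2
     & minn #|B0 :&: Cb| #|N2| <= #|M|].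
  apply: complete_match.
  - by apply/subsetP => v /setIP[_ vC]; rewrite inE vC orbT.
  - by apply: subset_trans NZ; apply: subsetDl.
  move=> s w /setIP[sB sC] /setDP[wN wNA].
  move: (wN); rewrite in_Nbhd => /andP[wZ /existsP[z /andP[zZ ezw]]].
  have wCb : w \notin Cb by apply: contra wZ => wC; rewrite inE wC orbT.
  have wCa : w \notin Ca by apply: contra wZ => wC; rewrite inE wC.
  have zCb : z \in Cb.
    move: zZ; rewrite inE => /orP[zCa|//].
    by exfalso; move/negP: wNA; apply; rewrite in_Nbhd wCa; apply/existsP; exists z; rewrite zCa.
  case: A0_ne => a0 a0A.
  have a0C : a0 \notin Cb.
    apply/negP => a0C; have : a0 \in A0 :&: Cb by rewrite in_setI a0A a0C.
    by rewrite ACb inE.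
  have esa : e s a0 by rewrite e_sym; apply: KC.
  exact: (SPB s z a0 w sC zCb a0C wCb esa ezw).
have d1 : [disjoint A0 :&: Ca & B0 :&: Cb].
  rewrite -setI_eq0; apply/eqP/setP => v; rewrite !inE.
  apply/negbTE/negP => /andP[/andP[_ vA] /andP[_ vB]].
  by have := disjointFr dab vA; rewrite vB.
have d2 : [disjoint N1 & N2].
  rewrite -setI_eq0; apply/eqP/setP => v; rewrite !inE.
  by apply/negbTE/negP => /andP[/andP[_ h1] /andP[h2 _]]; rewrite h1 in h2.
have [mU cU] := match_union m1 m2 d1 d2.
have := leq_ltn_trans (mm_ge mU) Hm; rewrite cU => hM.
have := cardsID (Nbhd e Ca) N; rewrite -/N1 -/N2 => eN.
exact: (ar_fm c1 c2 hM eN kA kB).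
Qed.

Definition KB (Z : {set V}) := [&& Z \subset a :|: b, #|A0 :&: ~: Z| < 2 * k & #|B0 :&: ~: Z| < 2 * k].
Definition Good (Z : {set V}) := [/\ Z \subset a :|: b, Z :&: a != set0, Z :&: b != set0 & #|Nbhd e Z| < k].

Lemma cls x' x : t x' x -> cutt x' x \subset a :|: b -> ~~ KB (cutt x' x) ->
  small (cutt x' x) \/ (is_split setT e (cutt x' x) /\
     (A0 :&: cutt x' x = set0 \/ B0 :&: cutt x' x = set0)).
Proof.
move=> tx Cab nKB.
case Hs : (is_split setT e (cutt x' x)); first by right; split => //; apply: pure_of.
case: (dich (mm_lt tx (negbT Hs))) => [|[h1 h2]]; first by left.
by exfalso; move/negP: nKB; apply; rewrite /KB Cab /=; apply/andP; split; lia.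
Qed.

Lemma card0_of (S : {set V}) : S = set0 -> #|S| = 0.
Proof. by move=> ->; rewrite cards0. Qed.

Lemma arith_cls (k0 a1 a2 b1 b2 : nat) : 2 * k0 < a1 + a2 -> 2 * k0 < b1 + b2 ->
  (a1 < k0 /\ b1 < k0 \/ a1 = 0 \/ b1 = 0) -> (a2 < k0 /\ b2 < k0 \/ a2 = 0 \/ b2 = 0) ->
  (b1 = 0 /\ a2 = 0 /\ k0 <= a1 /\ k0 <= b2) \/ (a1 = 0 /\ b2 = 0 /\ k0 <= a2 /\ k0 <= b1).
Proof. lia. Qed.

Lemma cls_num (C : {set V}) : small C \/ (is_split setT e C /\ (A0 :&: C = set0 \/ B0 :&: C = set0)) ->
  #|A0 :&: C| < k /\ #|B0 :&: C| < k \/ #|A0 :&: C| = 0 \/ #|B0 :&: C| = 0.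
Proof.
case => [/andP[h1 h2]|[_ [->|->]]]; rewrite ?cards0; by [left | right; left | right; right].
Qed.

Lemma split_of (C : {set V}) : small C \/ (is_split setT e C /\ (A0 :&: C = set0 \/ B0 :&: C = set0)) ->
  k <= #|A0 :&: C| -> is_split setT e C.
Proof. by case => [/andP[h1 h2]|[]//] h; rewrite leqNgt h1 in h. Qed.
Lemma split_ofB (C : {set V}) : small C \/ (is_split setT e C /\ (A0 :&: C = set0 \/ B0 :&: C = set0)) ->
  k <= #|B0 :&: C| -> is_split setT e C.
Proof. by case => [/andP[h1 h2]|[]//] h; rewrite leqNgt h2 in h. Qed.

Lemma set0_of (S : {set V}) : #|S| = 0 -> S = set0.
Proof. by move/eqP; rewrite cards_eq0 => /eqP. Qed.

Lemma final_local x y x1 x2 : t x y -> t x1 x -> t x2 x ->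
  [disjoint cutt x1 x & cutt x2 x] ->
  cutt x y = cutt x1 x :|: cutt x2 x -> KB (cutt x y) ->
  ~~ KB (cutt x1 x) -> ~~ KB (cutt x2 x) -> Good (cutt x y).
Proof.
move=> txy t1 t2 d12 EZ /and3P[Zab hZA hZB] nK1 nK2.
set Z := cutt x y in EZ Zab hZA hZB *.
set C1 := cutt x1 x in EZ d12 nK1 *.
set C2 := cutt x2 x in EZ d12 nK2 *.
have eA := cnt_C A0 Z; have eB := cnt_C B0 Z.
have eA' := cnt_disj A0 d12; have eB' := cnt_disj B0 d12.
rewrite -EZ in eA' eB'.
have ZA : k < #|A0 :&: Z| := ar_pos eA hZA ha.
have ZB : k < #|B0 :&: Z| := ar_pos eB hZB hb.
have nsZ : ~~ is_split setT e Z.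
  apply/negP => Hs; case: (pure_of Zab Hs) => /card0_of E.
    by rewrite E in ZA.
  by rewrite E in ZB.
have Hm : mm e Z < k := mm_lt txy nsZ.
have [/andP[sZ _]|[bA bB]] := dich Hm.
  by rewrite ltnNge ltnW in sZ.
have hA2 : 2 * k < #|A0 :&: C1| + #|A0 :&: C2| :=
  @ar_sum k #|A0| #|A0 :&: Z| #|A0 :&: ~: Z| #|A0 :&: C1| #|A0 :&: C2| eA bA ha eA'.
have hB2 : 2 * k < #|B0 :&: C1| + #|B0 :&: C2| :=
  @ar_sum k #|B0| #|B0 :&: Z| #|B0 :&: ~: Z| #|B0 :&: C1| #|B0 :&: C2| eB bB hb eB'.
have C1ab : C1 \subset a :|: b by apply: subset_trans Zab; rewrite EZ subsetUl.
have C2ab : C2 \subset a :|: b by apply: subset_trans Zab; rewrite EZ subsetUr.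
have H1 := cls t1 C1ab nK1; have H2 := cls t2 C2ab nK2.
have good : #|Nbhd e Z| < k.
  case: (arith_cls hA2 hB2 (cls_num H1) (cls_num H2)) => [[b1 [a2 [ka1 kb2]]]|[a1 [b2 [ka2 kb1]]]].
  - rewrite EZ; apply: (final_match (split_of H1 ka1) (split_ofB H2 kb2) d12
      (set0_of b1) (set0_of a2) ka1 kb2).
    by rewrite -EZ.
  - rewrite EZ setUC; apply: (final_match (split_of H2 ka2) (split_ofB H1 kb1) _
      (set0_of b2) (set0_of a1) ka2 kb1); first by rewrite disjoint_sym.
    by rewrite setUC -EZ.
have ZA' : 0 < #|A0 :&: Z| by apply: leq_ltn_trans ZA.
have ZB' : 0 < #|B0 :&: Z| by apply: leq_ltn_trans ZB.
case/card_gt0P: ZA' => v; rewrite in_setI => /andP[vA vZ].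
case/card_gt0P: ZB' => w; rewrite in_setI => /andP[wB wZ].
split => //.
  by apply/set0Pn; exists v; rewrite in_setI vZ A0a.
by apply/set0Pn; exists w; rewrite in_setI wZ B0b.
Qed.

Lemma tsymm : symmetric t.
Proof. by case: HT => [[]]. Qed.

Lemma kb_children x y : t x y -> ~~ leaf t x -> exists x1 x2,
  [/\ t x1 x, t x2 x, cutt x y = cutt x1 x :|: cutt x2 x,
      (x1 != x2 -> [disjoint cutt x1 x & cutt x2 x]) &
      #|comp t x1 x| < #|comp t x y| /\ #|comp t x2 x| < #|comp t x y|].
Proof.
move=> txy nl; case: (children HT txy nl) => x1 [x2 [t1 t2 n1 n2 only]].
exists x1, x2; split.
- by rewrite tsymm.
- by rewrite tsymm.
- apply/setP => v; rewrite (cut_split HT v txy nl) in_setU.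
  apply/existsP/orP => [[x' /and3P[tx' nx' vx']]|[h|h]].
  + by case: (only x' tx' nx') => E; [left|right]; rewrite -E.
  + by exists x1; rewrite t1 n1.
  + by exists x2; rewrite t2 n2.
- move=> n12; rewrite -setI_eq0; apply/eqP/setP => v; rewrite in_setI in_set0.
  by apply/negbTE/negP => /andP[h1 h2]; exact: (child_disj HT t1 t2 n12 h1 h2).
- split; [exact: (comp_lt HT txy t1 n1) | exact: (comp_lt HT txy t2 n2)].
Qed.

Lemma comp_pos x y : 0 < #|comp t x y|.
Proof. by apply/card_gt0P; exists x; rewrite inE connect0. Qed.

Lemma leaf_cnt x y : t x y -> leaf t x -> 
  #|A0 :&: cutt x y| <= 1 /\ #|A0 :&: cutt x y| + #|A0 :&: ~: cutt x y| = #|A0|.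
Proof.
move=> txy lx; split; last exact: cnt_C.
rewrite (cut_leaf HT txy lx); apply: leq_trans (subset_leq_card (subsetIr _ _)) _.
by rewrite cards1.
Qed.

Lemma final_desc n : forall x y, #|comp t x y| <= n -> t x y -> KB (cutt x y) ->
  exists x' y', t x' y' /\ Good (cutt x' y').
Proof.
elim: n => [|n IH] x y hn txy kb; first by have := comp_pos x y; rewrite ltnNge hn.
case lx : (leaf t x).
  exfalso; have [h1 h2] := leaf_cnt txy lx.
  move: kb => /and3P[_ hA _].
  exact: (ar_leaf h2 h1 ha k_pos hA).
case: (kb_children txy (negbT lx)) => x1 [x2 [t1 t2 EZ d12 [c1 c2]]].
case k1 : (KB (cutt x1 x)).
  by apply: (IH x1 x) => //; rewrite -ltnS; apply: leq_trans c1 hn.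
case k2 : (KB (cutt x2 x)).
  by apply: (IH x2 x) => //; rewrite -ltnS; apply: leq_trans c2 hn.
case: (eqVneq x1 x2) => [E|n12].
  by move: kb; rewrite EZ -E setUid k1.
exists x, y; split => //.
apply: (final_local txy t1 t2 (d12 n12) EZ kb); by rewrite ?k1 ?k2.
Qed.

Definition hasR (C : {set V}) := [exists r in C, r \notin a :|: b].

Lemma noR_sub (C : {set V}) : ~~ hasR C -> C \subset a :|: b.
Proof.
move=> h; apply/subsetP => v vC; apply: contraR h => vn.
by apply/existsP; exists v; rewrite vC.
Qed.

Lemma inR_small (S u : {set V}) r : u \in L -> r \in u -> r \notin a :|: b -> S \subset u -> small S.
Proof.
move=> uL ru rn sub.
have E0 : forall (X0 : {set V}) (c : {set V}), c \in L -> X0 \subset c -> r \notin c ->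
    X0 :&: S = set0.
  move=> X0 c cL Xc rc; apply/setP => v; rewrite in_setI in_set0; apply/negbTE/negP => /andP[vX vS].
  have := inv_eq HP cL uL (subsetP Xc _ vX) (subsetP sub _ vS) => E.
  by rewrite E ru in rc.
have ra : r \notin a by apply: contra rn => h; rewrite inE h.
have rb : r \notin b by apply: contra rn => h; rewrite inE h orbT.
rewrite /small (E0 _ _ aL (act_sub e_sym a) ra) (E0 _ _ bL (act_sub e_sym b) rb) cards0.
by rewrite k_pos.
Qed.

Lemma twoR x y : t x y -> hasR (cutt x y) -> hasR (~: cutt x y) ->
  small (cutt x y) \/ small (~: cutt x y).
Proof.
move=> txy /existsP[r /andP[rC rn]] /existsP[r' /andP[rC' rn']].
case Hs : (is_split setT e (cutt x y)).
  case: (split_loc Hs) => u uL /orP[sub|sub].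
    by left; apply: (inR_small uL (subsetP sub _ rC) rn sub).
  by right; apply: (inR_small uL (subsetP sub _ rC') rn' sub).
case: (dich (mm_lt txy (negbT Hs))) => [h|[h1 h2]]; first by left.
by right; rewrite /small h1 h2.
Qed.

Lemma exist_one x y x1 x2 : t x y -> t x1 x -> t x2 x ->
  [disjoint cutt x1 x & cutt x2 x] -> cutt x y = cutt x1 x :|: cutt x2 x ->
  hasR (cutt x y) -> ~~ small (cutt x y) ->
  small (cutt x1 x) -> ~~ hasR (cutt x2 x) ->
  exists x' y', t x' y' /\ KB (cutt x' y').
Proof.
move=> txy t1 t2 d12 EZ hZ nsZ s1 nR2.
set Z := cutt x y in EZ hZ nsZ *.
set C1 := cutt x1 x in EZ d12 s1 *.
set C2 := cutt x2 x in EZ d12 nR2 *.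
have eA := cnt_C A0 Z; have eB := cnt_C B0 Z.
have eA' := cnt_disj A0 d12; have eB' := cnt_disj B0 d12.
rewrite -EZ in eA' eB'.
have eA2 := cnt_C A0 C2; have eB2 := cnt_C B0 C2.
move: s1 => /andP[s1A s1B].
case hD : (hasR (~: Z)).
  case: (twoR txy hZ hD) => [sZ|/andP[sDA sDB]]; first by rewrite sZ in nsZ.
  exists x2, x; split => //; rewrite /KB noR_sub //=.
  apply/andP; split.
    exact: (@ar_kb k #|A0| _ #|A0 :&: Z| _ _ _ eA2 (esym eA') eA s1A sDA).
  exact: (@ar_kb k #|B0| _ #|B0 :&: Z| _ _ _ eB2 (esym eB') eB s1B sDB).
exists x, x1; split; first by rewrite tsymm.
rewrite (cut_compl HT t1) /KB setCK; apply/and3P; split.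
- apply/subsetP => v; rewrite inE => vC1.
  case vZ : (v \in Z).
    have : v \in C2 by move: vZ; rewrite EZ inE (negbTE vC1).
    exact: (subsetP (noR_sub nR2)).
  have : v \in ~: Z by rewrite inE vZ.
  exact: (subsetP (noR_sub (negbT hD))).
- by apply: leq_trans s1A _; rewrite mul2n -addnn leq_addr.
- by apply: leq_trans s1B _; rewrite mul2n -addnn leq_addr.
Qed.

Lemma exist_local x y x1 x2 : t x y -> t x1 x -> t x2 x ->
  [disjoint cutt x1 x & cutt x2 x] -> cutt x y = cutt x1 x :|: cutt x2 x ->
  hasR (cutt x y) -> ~~ small (cutt x y) ->
  (hasR (cutt x1 x) -> small (cutt x1 x)) -> (hasR (cutt x2 x) -> small (cutt x2 x)) ->
  exists x' y', t x' y' /\ KB (cutt x' y').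
Proof.
move=> txy t1 t2 d12 EZ hZ nsZ h1 h2.
case r1 : (hasR (cutt x1 x)); case r2 : (hasR (cutt x2 x)).
- have /andP[s1A s1B] := h1 r1; have /andP[s2A s2B] := h2 r2.
  set Z := cutt x y in EZ hZ nsZ *.
  have eA := cnt_C A0 Z; have eB := cnt_C B0 Z.
  have eA' := cnt_disj A0 d12; have eB' := cnt_disj B0 d12.
  rewrite -EZ in eA' eB'.
  case hD : (hasR (~: Z)).
    case: (twoR txy hZ hD) => [sZ|/andP[sDA sDB]]; first by rewrite sZ in nsZ.
    by exfalso; exact: (ar_three (esym eA') eA s1A s2A sDA ha).
  exists y, x; split; first by rewrite tsymm.
  rewrite (cut_compl HT txy) /KB setCK noR_sub ?hD //=.
  apply/andP; split.
    by rewrite eA'; apply: ar_two s1A s2A.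
  by rewrite eB'; apply: ar_two s1B s2B.
- exact: (exist_one txy t1 t2 d12 EZ hZ nsZ (h1 r1) (negbT r2)).
- apply: (exist_one txy t2 t1 _ _ hZ nsZ (h2 r2) (negbT r1)).
    by rewrite disjoint_sym.
  by rewrite setUC.
- exfalso; move: hZ => /existsP[r /andP[]]; rewrite EZ in_setU => /orP[rC|rC] rn.
    have : hasR (cutt x1 x) by apply/existsP; exists r; rewrite rC.
    by rewrite r1.
  have : hasR (cutt x2 x) by apply/existsP; exists r; rewrite rC.
  by rewrite r2.
Qed.

Lemma exist_desc n : forall x y, #|comp t x y| <= n -> t x y -> hasR (cutt x y) ->
  ~~ small (cutt x y) -> exists x' y', t x' y' /\ KB (cutt x' y').
Proof.
elim: n => [|n IH] x y hn txy hR nsm; first by have := comp_pos x y; rewrite ltnNge hn.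
case lx : (leaf t x).
  exfalso; move: hR nsm; rewrite (cut_leaf HT txy lx) /hasR => /existsP[r /andP[/set1P Er rn]].
  case: (inv_cov HP r) => u uL ru.
  have sub : [set r] \subset u by rewrite sub1set.
  by rewrite -Er (inR_small uL ru rn sub).
case: (kb_children txy (negbT lx)) => x1 [x2 [t1 t2 EZ d12 [c1 c2]]].
case k1 : (hasR (cutt x1 x) && ~~ small (cutt x1 x)).
  move: k1 => /andP[hr hs].
  by apply: (IH x1 x) => //; rewrite -ltnS; apply: leq_trans c1 hn.
case k2 : (hasR (cutt x2 x) && ~~ small (cutt x2 x)).
  move: k2 => /andP[hr hs].
  by apply: (IH x2 x) => //; rewrite -ltnS; apply: leq_trans c2 hn.
case: (eqVneq x1 x2) => [E|n12].
  by move: hR nsm; rewrite EZ -E setUid => hR' nsm'; rewrite hR' nsm' in k1.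
apply: (exist_local txy t1 t2 (d12 n12) EZ hR nsm).
  by move=> hr; apply/negPn; apply: contraFN k1 => ->; rewrite hr.
by move=> hr; apply/negPn; apply: contraFN k2 => ->; rewrite hr.
Qed.

Lemma main_sec : exists x y, t x y /\ Good (cutt x y).
Proof.
case: R2 => c [d [cL dL ncd cout dout]].
case/set0Pn: (inv_ne HP cL) => r rc.
case/set0Pn: (inv_ne HP dL) => r' r'd.
case: (leaf_of HT r) => l ll Er.
have : 0 < deg t l by move: ll; rewrite /leaf => /eqP->.
rewrite /deg => /card_gt0P[y0]; rewrite inE => tly0.
have ty0l : t y0 l by rewrite tsymm.
have Ecut : cutt y0 l = ~: [set r] by rewrite (cut_compl HT tly0) (cut_leaf HT tly0 ll) Er.
have hR : hasR (cutt y0 l).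
  apply/existsP; exists r'; rewrite Ecut inE (dout _ r'd) andbT.
  apply/set1P => E; rewrite E in r'd.
  by have := inv_eq HP cL dL rc r'd => E'; rewrite E' eqxx in ncd.
have nsm : ~~ small (cutt y0 l).
  rewrite /small Ecut negb_and -leqNgt.
  have -> : A0 :&: ~: [set r] = A0.
    apply/setIidPl/subsetP => v vA; rewrite !inE; apply/eqP => E.
    by have := cout r rc; rewrite -E inE (A0a vA).
  by apply/orP; left; apply: leq_trans ha; rewrite mulSn leq_addr.
case: (exist_desc (leqnn _) ty0l hR nsm) => x' [y' [txy kb]].
exact: (final_desc (leqnn _) txy kb).
Qed.

End Main.

Theorem mainTheorem6 (V : finType) (e : rel V)
    (e_sym : symmetric e) (e_irr : irreflexive e)
    (k : nat) (k_pos : 0 < k)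
    (D : lgraph V -> Prop) (HD : split_decomp (init_lgraph e) D)
    (P : lgraph V) (HP : D P) (P_nontriv : 3 < #|lverts P|)
    (W : finType) (t : rel W) (delta : W -> V)
    (HT : branch_decomp t delta) (Hwidth : sm_width_lt e t delta k)
    (a b : {set V}) (Hab : heavy_pair e k P a b) :
  exists x y : W, t x y /\
    is_totinv P (cut t delta x y) [set a; b] /\
    #|Nbhd e (cut t delta x y)| < k.
Proof.
case: Hab => aL bL ab ha hb.
have [IP Pp] := inv_D e_sym HD (Inv_init e_sym e_irr) HP.
case: (init_or_conn e_sym HD) => [Hinit|Gc].
  exfalso; move: aL ha; rewrite (Hinit P HP) /= => /imsetP[v _ ->].
  have : #|act e [set v]| <= 1.
    by rewrite -(cards1 v); apply: subset_leq_card; apply: act_sub.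
  move=> h1 h2; have := leq_trans h2 h1; lia.
have Pc := P_conn e_sym IP Gc.
case: (main_sec e_sym IP Pc Pp P_nontriv Gc HT k_pos Hwidth aL bL ab ha hb) => x [y [txy [Zab Za Zb hN]]].
exists x, y; split => //; split => //.
set Z := cut t delta x y in Zab Za Zb hN *.
apply/minsetP; split.
  apply/andP; split; first by apply/subsetP => u /set2P[->|->].
  apply/subsetP => v vZ; apply/bigcupP.
  by case/setUP: (subsetP Zab _ vZ) => h; [exists a; rewrite ?set21 | exists b; rewrite ?set22].
move=> B /andP[BL ZB] sub.
have nab : a != b by move: ab; rewrite (inv_adj IP) // => /andP[].
have inB : forall u, u \in lverts P -> Z :&: u != set0 -> u \in [set a; b] -> u \in B.
  move=> u uL /set0Pn[v]; rewrite in_setI => /andP[vZ vu] uab.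
  case/bigcupP: (subsetP ZB _ vZ) => u' u'B vu'.
  have u'L := subsetP BL _ u'B.
  by rewrite (inv_eq IP uL u'L vu vu').
apply/eqP; rewrite eqEsubset sub /=; apply/subsetP => u /set2P[->|->].
  by apply: inB => //; rewrite set21.
by apply: inB => //; rewrite set22.
Qed.
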